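(* Let $k\geq 2$ and let $\mathcal{T}$ be a generalized $k$-forest whose vertex set $V(\mathcal T)$ (the union of its edges) has $v$ elements. Then there is a tight $k$-tree $\mathcal{T}^+$ with vertex set $V(\mathcal T)$ such that every edge of $\mathcal{T}$ is an edge of $\mathcal{T}^+$.
   Context: A $k$-graph is a family of $k$-element sets (edges); its vertex set is the union of its edges. Generalized $k$-forests are defined inductively as sequences of $k$-sets: a single $k$-set $E_1$ is a generalized $k$-forest. If $\{E_1,\dots,E_u\}$ is a generalized $k$-forest with vertex set $V=E_1\cup\dots\cup E_u$, and $A_{u+1}\subseteq E_i$ for some $1\leq i\leq u$ (with $A_{u+1}$ possibly empty), and $B$ is a set with $B\cap V=\emptyset$ and $|A_{u+1}|+|B|=k$, then $\{E_1,\dots,E_u,E_{u+1}\}$ with $E_{u+1}:=A_{u+1}\cup B$ is a generalized $k$-forest; $A_{u+1}$ is called the defining set of $E_{u+1}$ (so $A_{u+1}=E_{u+1}\cap(E_1\cup\dots\cup E_u)$). A generalized $k$-forest is a generalized $k$-tree if it is connected (equivalently, all defining sets $A_2,\dots,A_{q}$ are nonempty). It is a tight $k$-forest if every defining set is either empty or has exactly $k-1$ elements, and a tight $k$-tree if it is a connected tight $k$-forest, i.e. every defining set has exactly $k-1$ elements. *)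

(* Defs.v *)
From mathcomp Require Import all_boot.
Set Implicit Arguments.
Unset Strict Implicit.
Unset Printing Implicit Defensive.

(* A k-graph on a finite ambient type T is a sequence of edges (sets of T). *)
Definition vset (T : finType) (s : seq {set T}) : {set T} :=
  \bigcup_(E <- s) E.

(* Forests built by the inductive rule of the paper, where the size of
   each defining set A_{u+1} must satisfy the predicate P.
   The sequence is extended at its end: E_{u+1} := A_{u+1} :|: B. *)
Inductive forest_with (T : finType) (k : nat) (P : nat -> bool)
  : seq {set T} -> Prop :=
| fw_single (E : {set T}) : #|E| = k -> forest_with k P [:: E]
| fw_step (s : seq {set T}) (Ei A B : {set T}) :
    forest_with k P s ->
    Ei \in s -> A \subset Ei ->
    [disjoint B & vset s] ->
    #|A| + #|B| = k ->
    P #|A| ->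
    forest_with k P (rcons s (A :|: B)).

Definition gen_forest (T : finType) (k : nat) (s : seq {set T}) : Prop :=
  forest_with k (fun _ => true) s.

Definition tight_forest (T : finType) (k : nat) (s : seq {set T}) : Prop :=
  forest_with k (fun a => (a == 0) || (a == k.-1)) s.

Definition tight_tree (T : finType) (k : nat) (s : seq {set T}) : Prop :=
  forest_with k (fun a => a == k.-1) s.

(* Main.v *)
Require Import Defs.
From mathcomp Require Import all_boot.

Section Aux.
Variable T : finType.

Lemma disjP (A B : {set T}) :
  reflect (forall x, x \in A -> x \in B -> False) [disjoint A & B].
Proof.
rewrite -setI_eq0; apply: (iffP eqP) => [H x xA xB | H].
  have : x \in A :&: B by rewrite inE xA xB.
  by rewrite H inE.
apply/setP => x; rewrite !inE; apply/negP => /andP[]; exact: H.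
Qed.

Lemma vset_rcons (s : seq {set T}) E : vset (rcons s E) = vset s :|: E.
Proof. by rewrite /vset -cats1 big_cat big_seq1. Qed.

Lemma vset_mem (s : seq {set T}) E x : E \in s -> x \in E -> x \in vset s.
Proof.
elim: s => //= F s IH; rewrite inE /vset big_cons => /orP[/eqP<- xE|/IH H xE].
  by rewrite inE xE.
by rewrite inE H ?orbT.
Qed.

Lemma forest_card k P (s : seq {set T}) :
  forest_with k P s -> forall E, E \in s -> #|E| = k.
Proof.
elim => [E hE|s' Ei A B _ IH hEi hA hdis hk _] F.
  by rewrite inE => /eqP->.
rewrite mem_rcons inE => /orP[/eqP->|/IH //].
rewrite cardsU hk.
have -> : #|A :&: B| = 0.
  apply/eqP; rewrite cards_eq0; apply/eqP/setP => x; rewrite !inE.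
  apply/negP => /andP[xA xB].
  move/disjP: hdis => /(_ x xB); apply.
  exact: (@vset_mem s' Ei x hEi (subsetP hA x xA)).
by rewrite subn0.
Qed.

Lemma swap k : 0 < k -> forall n (S : seq {set T}) (B A C : {set T}),
  tight_tree k S -> #|B| = n -> C \in S -> A \subset C ->
  [disjoint B & vset S] -> #|A| + #|B| = k ->
  exists S', tight_tree k S' /\ vset S' = vset S :|: B /\
    {subset S <= S'} /\ (A :|: B) \in S'.
Proof.
move=> k0; elim => [|n IH] S B A C hS hB hC hAC hdis hk.
  have B0 := cards0_eq hB; subst B.
  have hCk := @forest_card k _ S hS C hC.
  have AC : A = C.
    by apply/eqP; rewrite eqEcard hAC hCk -hk cards0 addn0 leqnn.
  exists S; split => //; split; first by rewrite setU0.
  by split => //; rewrite setU0 AC.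
have hCk := @forest_card k _ S hS C hC.
have hCv : forall x, x \in C -> x \in vset S by move=> x; apply: vset_mem.
have [b bB] : exists b, b \in B by apply/card_gt0P; rewrite hB.
have bS : b \notin vset S.
  by apply/negP => bS; move/disjP: hdis; apply; [exact: bB|exact: bS].
have [c cCA] : exists c, c \in C :\: A.
  apply/card_gt0P; rewrite cardsD (setIidPr hAC) hCk -hk hB.
  by rewrite addnS subSn ?leq_addr // addKn.
move: cCA; rewrite inE => /andP[cA cC].
have hCc : #|C :\ c| = k.-1.
  by move: (cardsD1 c C); rewrite cC hCk add1n => ->.
set D := (C :\ c) :|: [set b].
have hS1 : tight_tree k (rcons S D).
  apply: (fw_step hS hC).
  - exact: subsetDl.
  - apply/disjP => x; rewrite inE => /eqP-> bS'; by rewrite bS' in bS.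
  - by rewrite cards1 addn1 hCc prednK.
  - by rewrite /= hCc.
have hB' : #|B :\ b| = n.
  by move: (cardsD1 b B); rewrite bB hB add1n => -[].
have hD : D \in rcons S D by rewrite mem_rcons inE eqxx.
have bA : b \notin A.
  by apply/negP => bA; rewrite hCv ?(subsetP hAC) in bS.
have hAD : b |: A \subset D.
  apply/subsetP => x; rewrite !inE => /orP[->|xA]; first by rewrite orbT.
  rewrite (subsetP hAC x xA) andbT; apply/orP; left.
  by apply/eqP => xc; rewrite -xc xA in cA.
have hdis' : [disjoint B :\ b & vset (rcons S D)].
  rewrite vset_rcons; apply/disjP => x; rewrite !inE => /andP[xb xB].
  case/orP => [xS|/orP[/andP[_ xC]|xb']].
  - by move/disjP: hdis; apply; [exact: xB|exact: xS].
  - by move/disjP: hdis; apply; [exact: xB|exact: hCv].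
  - by rewrite xb' in xb.
have hk' : #|b |: A| + #|B :\ b| = k.
  by rewrite cardsU1 bA hB' add1n addSn -addnS -hB hk.
have [S' [hS' [hv [hsub hin]]]] := IH (rcons S D) (B :\ b) (b |: A) D hS1
  hB' hD hAD hdis' hk'.
exists S'; split => //; split.
  rewrite hv vset_rcons; apply/setP => x; rewrite !inE.
  case xS: (x \in vset S) => //=.
  case xb: (x == b); first by rewrite (eqP xb) bB !orbT.
  rewrite /= orbF; case xB: (x \in B); first by rewrite orbT.
  by rewrite orbF; apply/negP => /andP[_ /hCv]; rewrite xS.
split; first by move=> E ES; apply: hsub; rewrite mem_rcons inE ES orbT.
suff <- : b |: A :|: B :\ b = A :|: B by [].
apply/setP => x; rewrite !inE.
case xb: (x == b); first by rewrite (eqP xb) bB !orbT.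
by [].
Qed.
End Aux.

Theorem proposition3p1 (T : finType) (k : nat) (F : seq {set T}) :
  2 <= k -> gen_forest k F ->
  exists Fplus : seq {set T},
    tight_tree k Fplus /\ vset Fplus = vset F /\ {subset F <= Fplus}.
Proof.
move=> k2; have k0 : 0 < k by apply: leq_trans k2.
elim => [E hE|s Ei A B hs IH hEi hA hdis hk _].
  exists [:: E]; split; first exact: fw_single.
  by split => // x.
have [Sp [hSp [hv hsub]]] := IH.
have hAB : A \subset vset s.
  apply/subsetP => x xA; exact: (@vset_mem T s Ei x hEi (subsetP hA x xA)).
have hdis' : [disjoint B & vset Sp] by rewrite hv.
have [S' [hS' [hv' [hsub' hin]]]] :=
  @swap T k k0 #|B| Sp B A Ei hSp erefl (hsub _ hEi) hA hdis' hk.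
exists S'; split => //; split.
  by rewrite hv' hv vset_rcons setUA (setUidPl hAB).
move=> E; rewrite mem_rcons inE => /orP[/eqP->//|/hsub/hsub'//].
Qed.
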